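(* Fix $F$ and $\phi$, and let $i$ be any individual with cost $\gamma_i$. If $k_i^*(t,F)=k_1^*(t,F)$ and $t'>t$, then $k_i^*(t',F)=k_1^*(t',F)$.
   Context: Costs $\gamma_i\in\mathbb{R}$ of compliance are distributed according to a continuously differentiable CDF $F$ with log-concave density $f$ of full support on $\mathbb{R}$. For $t\ge0$, define $k_0=k_0^*(t,F)$ and $k_1=k_1^*(t,F)$ implicitly by $k_0=t-\frac{F(k_0)}{f(k_0)}$ and $k_1=t+\frac{1-F(k_1)}{f(k_1)}$. Individual $i$'s optimal $k$ is $k_i^*(t,F)=k_1$ if $\gamma_i\le k_0F(k_0)+k_1(1-F(k_1))+t(F(k_1)-F(k_0))$, and $k_i^*(t,F)=k_0$ otherwise. *)

(* Defs.v *)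
From Stdlib Require Import Reals.
From Coquelicot Require Import Coquelicot.
Open Scope R_scope.

Definition admissible_cdf (F f : R -> R) : Prop :=
  (forall x, is_derive F x (f x)) /\
  (forall x, continuous f x) /\
  (forall x, 0 < f x) /\
  is_lim F m_infty 0 /\
  is_lim F p_infty 1 /\
  (forall x y l, 0 <= l <= 1 ->
     l * ln (f x) + (1 - l) * ln (f y) <= ln (f (l * x + (1 - l) * y))).

Definition is_k0star (F f : R -> R) (t k0 : R) : Prop :=
  k0 = t - F k0 / f k0.

Definition is_k1star (F f : R -> R) (t k1 : R) : Prop :=
  k1 = t + (1 - F k1) / f k1.

Definition threshold (F : R -> R) (t k0 k1 : R) : R :=
  k0 * F k0 + k1 * (1 - F k1) + t * (F k1 - F k0).

Definition kistar (F : R -> R) (gamma t k0 k1 : R) : R :=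
  if Rle_dec gamma (threshold F t k0 k1) then k1 else k0.

(* Main.v *)
Require Import Defs.
From Stdlib Require Import Reals Lra.
From Coquelicot Require Import Coquelicot.
Open Scope R_scope.

Lemma dprod (u v : R -> R) du dv x :
  is_derive u x du -> is_derive v x dv ->
  is_derive (fun y => u y * v y) x (du * v x + u x * dv).
Proof. intros H1 H2. exact (is_derive_mult u v x du dv H1 H2 Rmult_comm). Qed.

Lemma deriv_eq (h : R -> R) x d d' : is_derive h x d -> d = d' -> is_derive h x d'.
Proof. intros H ->; exact H. Qed.

Lemma cont_of_deriv (h dh : R -> R) x : (forall y, is_derive h y (dh y)) -> continuity_pt h x.
Proof.
  intros H. apply continuity_pt_filterlim.
  apply (ex_derive_continuous (K:=R_AbsRing) (V:=R_NormedModule) h x).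
  exists (dh x). apply H.
Qed.

Lemma mono_le (h dh : R -> R) a b : a <= b -> (forall x, is_derive h x (dh x)) ->
  (forall x, a <= x <= b -> 0 <= dh x) -> h a <= h b.
Proof.
  intros Hab Hd Hp.
  destruct (MVT_gen h a b dh) as [c [Hc Hm]].
  - intros; apply Hd.
  - intros; eapply cont_of_deriv; eauto.
  - rewrite Rmin_left in Hc by lra. rewrite Rmax_right in Hc by lra.
    assert (0 <= dh c * (b - a)) by (apply Rmult_le_pos; [apply Hp; lra | lra]). lra.
Qed.

Lemma deriv_shift (F f : R -> R) a :
  (forall x, is_derive F x (f x)) -> forall u, is_derive (fun u => F (a + u)) u (f (a + u)).
Proof.
  intros H u.
  assert (Hg : is_derive (fun u => a + u) u 1) by (auto_derive; auto; ring).
  eapply deriv_eq. apply (is_derive_comp F (fun u => a + u) u (f (a+u)) 1). apply H. apply Hg.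
  simpl. unfold scal; simpl. unfold mult; simpl. ring.
Qed.

Lemma deriv_shiftm (F f : R -> R) a :
  (forall x, is_derive F x (f x)) -> forall u, is_derive (fun u => F (a - u)) u (- f (a - u)).
Proof.
  intros H u.
  assert (Hg : is_derive (fun u => a - u) u (-1)) by (auto_derive; auto; ring).
  eapply deriv_eq. apply (is_derive_comp F (fun u => a - u) u (f (a-u)) (-1)). apply H. apply Hg.
  simpl. unfold scal; simpl. unfold mult; simpl. ring.
Qed.

Lemma nonneg_at0 (H dH : R -> R) : (forall u, is_derive H u (dH u)) ->
  (forall u, 0 <= u -> dH u <= 0) ->
  (forall eps, 0 < eps -> exists U, 0 <= U /\ Rabs (H U) < eps) -> 0 <= H 0.
Proof.
  intros Hd Hn Hl.
  destruct (Rle_or_lt 0 (H 0)) as [h|h]; auto.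
  destruct (Hl (- H 0)) as [U [HU HA]]; [lra|].
  assert (H U <= H 0).
  { assert (- H 0 <= - H U); [|lra].
    apply (mono_le (fun u => - H u) (fun u => - dH u)); auto.
    - intros; apply (is_derive_opp H x (dH x)); auto.
    - intros x Hx; specialize (Hn x ltac:(lra)); lra. }
  apply Rabs_def2 in HA. lra.
Qed.

Lemma lc_ineq (F f : R -> R) : admissible_cdf F f ->
  forall x y u, x <= y -> 0 <= u -> f (y + u) * f x <= f (x + u) * f y.
Proof.
  intros [_ [_ [Hpos [_ [_ Hlc]]]]] x y u Hxy Hu.
  destruct (Req_dec u 0) as [->|Hu0].
  { rewrite !Rplus_0_r. lra. }
  set (d := y - x + u).
  assert (Hd : 0 < d) by (unfold d; lra).
  set (l := (y - x) / d).
  assert (Hl : 0 <= l <= 1).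
  { unfold l; split. apply Rdiv_le_0_compat; lra.
    apply (Rmult_le_reg_r d); auto. unfold Rdiv. rewrite Rmult_assoc, Rinv_l by lra. unfold d; lra. }
  pose proof (Hlc x (y + u) l Hl) as H1.
  pose proof (Hlc x (y + u) (1 - l) ltac:(lra)) as H2.
  replace (l * x + (1 - l) * (y + u)) with (x + u) in H1
    by (unfold l, d; field; lra).
  replace ((1 - l) * x + (1 - (1 - l)) * (y + u)) with y in H2
    by (unfold l, d; field; lra).
  replace (1 - (1 - l)) with l in H2 by ring.
  assert (Hs : ln (f (y + u) * f x) <= ln (f (x + u) * f y)).
  { rewrite !ln_mult by auto. lra. }
  destruct (Rle_or_lt (f (y + u) * f x) (f (x + u) * f y)) as [h|h]; auto.
  pose proof (ln_increasing _ _ ltac:(apply Rmult_lt_0_compat; auto) h). lra.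
Qed.
Lemma dlin (g1 g2 : R->R) a b c d1 d2 x: is_derive g1 x d1 -> is_derive g2 x d2 ->
  is_derive (fun u => a * g1 u - b * g2 u + c) x (a*d1 - b*d2).
Proof.
  intros H1 H2.
  pose proof (is_derive_plus (K:=R_AbsRing) (V:=R_NormedModule) (fun u => a * g1 u - b * g2 u) (fun _ => c) x _ _
    (is_derive_minus (K:=R_AbsRing)(V:=R_NormedModule) (fun u => a*g1 u) (fun u => b * g2 u) x _ _
       (is_derive_scal _ _ a _ H1) (is_derive_scal _ _ b _ H2)) (is_derive_const c x)) as H.
  eapply deriv_eq. exact H. unfold minus, plus, opp, zero; simpl. ring.
Qed.


Lemma F_incr F f : admissible_cdf F f -> forall x y, x < y -> F x < F y.
Proof.
  intros [HF [_ [Hp _]]] x y Hxy.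
  apply (incr_function F m_infty p_infty f); simpl; auto; intros; apply Rlt_gt; auto.
Qed.

Lemma F_pos F f : admissible_cdf F f -> forall x, 0 < F x.
Proof.
  intros Ha x. pose proof (F_incr F f Ha) as Hi.
  destruct Ha as [_ [_ [_ [Hm _]]]].
  apply is_lim_spec in Hm. unfold is_lim' in Hm; simpl in Hm.
  assert (forall z, 0 <= F z).
  { intros z. destruct (Rle_or_lt 0 (F z)) as [h|h]; auto.
    destruct (Hm (mkposreal (- F z) ltac:(lra))) as [M HM]. simpl in HM.
    set (w := Rmin (M - 1) (z - 1)).
    assert (w < M) by (unfold w; pose proof (Rmin_l (M-1) (z-1)); lra).
    assert (w < z) by (unfold w; pose proof (Rmin_r (M-1) (z-1)); lra).
    specialize (HM w ltac:(lra)). specialize (Hi w z ltac:(lra)).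
    apply Rabs_def2 in HM. lra. }
  specialize (Hi (x - 1) x ltac:(lra)). specialize (H (x - 1)). lra.
Qed.

Lemma F_lt1 F f : admissible_cdf F f -> forall x, F x < 1.
Proof.
  intros Ha x. pose proof (F_incr F f Ha) as Hi.
  destruct Ha as [_ [_ [_ [_ [Hm _]]]]].
  apply is_lim_spec in Hm. unfold is_lim' in Hm; simpl in Hm.
  assert (forall z, F z <= 1).
  { intros z. destruct (Rle_or_lt (F z) 1) as [h|h]; auto.
    destruct (Hm (mkposreal (F z - 1) ltac:(lra))) as [M HM]. simpl in HM.
    set (w := Rmax (M + 1) (z + 1)).
    assert (M < w) by (unfold w; pose proof (Rmax_l (M+1) (z+1)); lra).
    assert (z < w) by (unfold w; pose proof (Rmax_r (M+1) (z+1)); lra).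
    specialize (HM w ltac:(lra)). specialize (Hi z w ltac:(lra)).
    apply Rabs_def2 in HM. lra. }
  specialize (Hi x (x + 1) ltac:(lra)). specialize (H (x + 1)). lra.
Qed.

Lemma ratioG F f : admissible_cdf F f -> forall x y, x <= y ->
  (1 - F y) * f x <= (1 - F x) * f y.
Proof.
  intros Ha x y Hxy. pose proof Ha as [HF [_ [Hp [_ [Hm _]]]]].
  set (H := fun u => f x * F (y + u) - f y * F (x + u) + (f y - f x)).
  assert (0 <= H 0).
  { apply (nonneg_at0 H (fun u => f x * f (y + u) - f y * f (x + u))).
    - intros u. unfold H. eapply deriv_eq.
      apply dlin. apply (deriv_shift F f y HF u). apply (deriv_shift F f x HF u).
      reflexivity.
    - intros u Hu. pose proof (lc_ineq F f Ha x y u Hxy Hu). lra.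
    - intros eps He.
      apply is_lim_spec in Hm. unfold is_lim' in Hm; simpl in Hm.
      pose proof (Hp x). pose proof (Hp y).
      set (e := eps / (f x + f y)).
      assert (He' : 0 < e) by (unfold e; apply Rdiv_lt_0_compat; lra).
      destruct (Hm (mkposreal e He')) as [M HM]. simpl in HM.
      set (U := Rmax 0 (M - x + 1)).
      assert (0 <= U) by apply Rmax_l.
      assert (M - x + 1 <= U) by apply Rmax_r.
      exists U. split; auto. unfold H.
      pose proof (HM (x + U) ltac:(lra)) as A1.
      pose proof (HM (y + U) ltac:(lra)) as A2.
      apply Rabs_def2 in A1. apply Rabs_def2 in A2.
      assert (eps = e * (f x + f y)) by (unfold e; field; lra).
      apply Rabs_def1; nra. }
  unfold H in H0. rewrite !Rplus_0_r in H0. lra.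
Qed.

Lemma ratioF F f : admissible_cdf F f -> forall x y, x <= y ->
  F x * f y <= F y * f x.
Proof.
  intros Ha x y Hxy. pose proof Ha as [HF [_ [Hp [Hm _]]]].
  set (H := fun u => f x * F (y - u) - f y * F (x - u) + 0).
  assert (0 <= H 0).
  { apply (nonneg_at0 H (fun u => - f x * f (y - u) + f y * f (x - u))).
    - intros u. unfold H. eapply deriv_eq.
      apply dlin. apply (deriv_shiftm F f y HF u). apply (deriv_shiftm F f x HF u).
      simpl; ring.
    - intros u Hu. pose proof (lc_ineq F f Ha (x - u) (y - u) u ltac:(lra) Hu).
      replace (y - u + u) with y in H0 by ring.
      replace (x - u + u) with x in H0 by ring. lra.
    - intros eps He.
      apply is_lim_spec in Hm. unfold is_lim' in Hm; simpl in Hm.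
      pose proof (Hp x). pose proof (Hp y).
      set (e := eps / (f x + f y)).
      assert (He' : 0 < e) by (unfold e; apply Rdiv_lt_0_compat; lra).
      destruct (Hm (mkposreal e He')) as [M HM]. simpl in HM.
      set (U := Rmax 0 (y - M + 1)).
      assert (0 <= U) by apply Rmax_l.
      assert (y - M + 1 <= U) by apply Rmax_r.
      exists U. split; auto. unfold H.
      pose proof (HM (x - U) ltac:(lra)) as A1.
      pose proof (HM (y - U) ltac:(lra)) as A2.
      rewrite Rminus_0_r in A1, A2.
      apply Rabs_def2 in A1. apply Rabs_def2 in A2.
      assert (eps = e * (f x + f y)) by (unfold e; field; lra).
      apply Rabs_def1; nra. }
  unfold H in H0. rewrite !Rminus_0_r in H0. lra.
Qed.


Lemma div_le x y p q : 0 < p -> 0 < q -> x * q <= y * p -> x / p <= y / q.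
Proof.
  intros Hp Hq H.
  assert (E1 : x = (x / p) * p) by (field; lra).
  assert (E2 : y = (y / q) * q) by (field; lra).
  set (X := x / p) in *. set (Y := y / q) in *.
  rewrite E1, E2 in H.
  assert (0 < p * q) by (apply Rmult_lt_0_compat; auto).
  destruct (Rle_or_lt X Y); auto. nra.
Qed.

Lemma d1mF F f : admissible_cdf F f -> forall k, is_derive (fun k => 1 - F k) k (- f k).
Proof.
  intros [HF _] k. eapply deriv_eq.
  eapply is_derive_ext. 2: apply (dlin F F 0 1 1 (f k) (f k) k (HF k) (HF k)).
  intros; simpl; ring. simpl; ring.
Qed.

Lemma k1_max F f : admissible_cdf F f -> forall s a, is_k1star F f s a ->
  forall k, (k - s) * (1 - F k) <= (a - s) * (1 - F a).
Proof.
  intros Ha s a Hk k. pose proof Ha as [HF [_ [Hp _]]].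
  unfold is_k1star in Hk.
  assert (Ea : 1 - F a = (a - s) * f a) by (pose proof (Hp a); rewrite Hk at 2; field; lra).
  assert (Hd : forall z, is_derive (fun k => (k - s) * (1 - F k)) z (1 * (1 - F z) + (z - s) * (- f z))).
  { intros z. apply (dprod (fun k => k - s) (fun k => 1 - F k)). auto_derive; auto; ring. apply (d1mF F f Ha). }
  destruct (Rle_or_lt a k) as [h|h].
  - assert (- ((a - s) * (1 - F a)) <= - ((k - s) * (1 - F k))); [|lra].
    apply (mono_le (fun k => - ((k - s) * (1 - F k))) (fun z => - (1 * (1 - F z) + (z - s) * (- f z)))); auto.
    + intros z. apply (is_derive_opp (fun k => (k - s) * (1 - F k))). apply Hd.
    + intros z Hz. pose proof (ratioG F f Ha a z ltac:(lra)) as R.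
      pose proof (Hp a); pose proof (Hp z).
      rewrite Ea in R.
      assert (1 - F z <= (a - s) * f z).
      { apply (Rmult_le_reg_r (f a)); auto. nra. }
      nra.
  - apply (mono_le (fun k => ((k - s) * (1 - F k))) (fun z => (1 * (1 - F z) + (z - s) * (- f z)))); auto; try lra.
    intros z Hz. pose proof (ratioG F f Ha z a ltac:(lra)) as R.
    pose proof (Hp a); pose proof (Hp z).
    rewrite Ea in R.
    assert ((a - s) * f z <= 1 - F z).
    { apply (Rmult_le_reg_r (f a)); auto. nra. }
    nra.
Qed.

Lemma k0_min F f : admissible_cdf F f -> forall s b, is_k0star F f s b ->
  forall k, (b - s) * F b <= (k - s) * F k.
Proof.
  intros Ha s b Hk k. pose proof Ha as [HF [_ [Hp _]]].
  unfold is_k0star in Hk.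
  assert (Eb : F b = (s - b) * f b) by (pose proof (Hp b); rewrite Hk at 2; field; lra).
  assert (Hd : forall z, is_derive (fun k => (k - s) * F k) z (1 * F z + (z - s) * f z)).
  { intros z. apply (dprod (fun k => k - s) F). auto_derive; auto; ring. apply HF. }
  destruct (Rle_or_lt b k) as [h|h].
  - apply (mono_le (fun k => ((k - s) * F k)) (fun z => (1 * F z + (z - s) * f z))); auto.
    intros z Hz. pose proof (ratioF F f Ha b z ltac:(lra)) as R.
    pose proof (Hp b); pose proof (Hp z).
    rewrite Eb in R.
    assert ((s - b) * f z <= F z).
    { apply (Rmult_le_reg_r (f b)); auto. nra. }
    nra.
  - assert (- ((k - s) * F k) <= - ((b - s) * F b)); [|lra].
    apply (mono_le (fun k => - ((k - s) * F k)) (fun z => - (1 * F z + (z - s) * f z))); try lra.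
    + intros z. apply (is_derive_opp (fun k => (k - s) * F k)). apply Hd.
    + intros z Hz. pose proof (ratioF F f Ha z b ltac:(lra)) as R.
      pose proof (Hp b); pose proof (Hp z).
      rewrite Eb in R.
      assert (F z <= (s - b) * f z).
      { apply (Rmult_le_reg_r (f b)); auto. nra. }
      nra.
Qed.


Lemma k0_mono F f : admissible_cdf F f -> forall s s2 a b, s <= s2 ->
  is_k0star F f s a -> is_k0star F f s2 b -> a <= b.
Proof.
  intros Ha s s2 a b Hs Hka Hkb. pose proof Ha as [_ [_ [Hp _]]].
  unfold is_k0star in *.
  destruct (Rle_or_lt a b) as [h|h]; auto.
  pose proof (ratioF F f Ha b a ltac:(lra)).
  pose proof (div_le (F b) (F a) (f b) (f a) (Hp b) (Hp a) H). lra.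
Qed.

Lemma k1_mono F f : admissible_cdf F f -> forall s s2 a b, s <= s2 ->
  is_k1star F f s a -> is_k1star F f s2 b -> a <= b.
Proof.
  intros Ha s s2 a b Hs Hka Hkb. pose proof Ha as [_ [_ [Hp _]]].
  unfold is_k1star in *.
  destruct (Rle_or_lt a b) as [h|h]; auto.
  pose proof (ratioG F f Ha b a ltac:(lra)).
  pose proof (div_le (1 - F a) (1 - F b) (f a) (f b) (Hp a) (Hp b) H). lra.
Qed.

Lemma thr_eq F s a0 a1 : threshold F s a0 a1 = s + (a1 - s) * (1 - F a1) + (a0 - s) * F a0.
Proof. unfold threshold; ring. Qed.

Lemma direct F f : admissible_cdf F f -> forall s s2 a0 a1 b0 b1, s <= s2 ->
  is_k0star F f s a0 -> is_k1star F f s a1 ->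
  is_k0star F f s2 b0 -> is_k1star F f s2 b1 -> b0 <= a1 ->
  threshold F s a0 a1 <= threshold F s2 b0 b1.
Proof.
  intros Ha s s2 a0 a1 b0 b1 Hs H0 H1 H2 H3 Hb.
  rewrite !thr_eq.
  pose proof (k1_max F f Ha s2 b1 H3 a1).
  pose proof (k0_min F f Ha s a0 H0 b0).
  assert (F b0 <= F a1).
  { destruct (Req_dec b0 a1) as [->|]; [lra|]. left; apply (F_incr F f Ha); lra. }
  assert (0 <= (s2 - s) * (F a1 - F b0)) by (apply Rmult_le_pos; lra).
  nra.
Qed.

Lemma contF F f : admissible_cdf F f -> forall x, continuity_pt F x.
Proof. intros [HF _] x. apply (cont_of_deriv F f x HF). Qed.

Lemma contf F f : admissible_cdf F f -> forall x, continuity_pt f x.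
Proof. intros [_ [Hc _]] x. apply continuity_pt_filterlim. apply Hc. Qed.

Lemma exist_mid F f : admissible_cdf F f -> forall s s2 m a0 a1 b0 b1, s <= m <= s2 ->
  is_k0star F f s a0 -> is_k1star F f s a1 ->
  is_k0star F f s2 b0 -> is_k1star F f s2 b1 ->
  exists c0 c1, is_k0star F f m c0 /\ is_k1star F f m c1.
Proof.
  intros Ha s s2 m a0 a1 b0 b1 Hm H0 H1 H2 H3.
  pose proof Ha as [_ [_ [Hp _]]].
  assert (Hfn : forall x, f x <> 0) by (intros x; pose proof (Hp x); lra).
  destruct (IVT_gen (fun k => k + F k / f k) a0 b0 m) as [c0 [_ Hc0]].
  { intros x. apply (continuity_pt_plus (fun k => k) (fun k => F k / f k)).
    apply continuity_pt_id.
    apply (continuity_pt_div F f); auto. apply (contF F f Ha). apply (contf F f Ha). }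
  { unfold is_k0star in *. rewrite Rmin_left, Rmax_right; lra. }
  destruct (IVT_gen (fun k => k - (1 - F k) / f k) a1 b1 m) as [c1 [_ Hc1]].
  { intros x. apply (continuity_pt_minus (fun k => k) (fun k => (1 - F k) / f k)).
    apply continuity_pt_id.
    apply (continuity_pt_div (fun k => 1 - F k) f); auto.
    apply (continuity_pt_minus (fun _ => 1) F). apply continuity_pt_const. intros u v; auto.
    apply (contF F f Ha). apply (contf F f Ha). }
  { unfold is_k1star in *. rewrite Rmin_left, Rmax_right; lra. }
  exists c0, c1. unfold is_k0star, is_k1star. split; lra.
Qed.


Lemma ind_step F f : admissible_cdf F f -> forall t k0t, is_k0star F f t k0t ->
  forall n : nat, forall s s2 a0 a1 b0 b1, t <= s -> s <= s2 ->
  s2 - s <= INR n * (F k0t / f k0t) ->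
  is_k0star F f s a0 -> is_k1star F f s a1 ->
  is_k0star F f s2 b0 -> is_k1star F f s2 b1 ->
  threshold F s a0 a1 <= threshold F s2 b0 b1.
Proof.
  intros Ha t k0t Hk0t. pose proof Ha as [_ [_ [Hp _]]].
  set (c := F k0t / f k0t).
  assert (Hc : 0 < c) by (unfold c; apply Rdiv_lt_0_compat; [apply (F_pos F f Ha)|apply Hp]).
  assert (Dir : forall s s2 a0 a1 b0 b1, t <= s -> s <= s2 -> s2 - s <= c ->
    is_k0star F f s a0 -> is_k1star F f s a1 ->
    is_k0star F f s2 b0 -> is_k1star F f s2 b1 ->
    threshold F s a0 a1 <= threshold F s2 b0 b1).
  { intros s s2 a0 a1 b0 b1 Ht Hs Hsc H0 H1 H2 H3.
    apply (direct F f Ha s s2 a0 a1 b0 b1); auto.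
    pose proof (k0_mono F f Ha t s2 k0t b0 ltac:(lra) Hk0t H2).
    pose proof (ratioF F f Ha k0t b0 H).
    pose proof (div_le _ _ _ _ (Hp k0t) (Hp b0) H4).
    fold c in H5.
    assert (0 <= (1 - F a1) / f a1).
    { apply Rdiv_le_0_compat. pose proof (F_lt1 F f Ha a1); lra. apply Hp. }
    unfold is_k0star, is_k1star in *. lra. }
  induction n as [|n IH]; intros s s2 a0 a1 b0 b1 Ht Hs Hsc H0 H1 H2 H3.
  - apply (Dir s s2 a0 a1 b0 b1); auto. simpl in Hsc. lra.
  - destruct (Rle_or_lt (s2 - s) c) as [h|h].
    + apply (Dir s s2 a0 a1 b0 b1); auto.
    + destruct (exist_mid F f Ha s s2 (s + c) a0 a1 b0 b1 ltac:(lra) H0 H1 H2 H3) as [c0 [c1 [C0 C1]]].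
      apply Rle_trans with (threshold F (s + c) c0 c1).
      * apply (Dir s (s + c) a0 a1 c0 c1); auto; lra.
      * apply (IH (s + c) s2 c0 c1 b0 b1); auto; try lra.
        rewrite S_INR in Hsc. lra.
Qed.

Theorem proposition6 (F f : R -> R) (gamma t t' k0 k1 k0' k1' : R) :
  admissible_cdf F f ->
  0 <= t -> t < t' ->
  is_k0star F f t k0 -> is_k1star F f t k1 ->
  is_k0star F f t' k0' -> is_k1star F f t' k1' ->
  kistar F gamma t k0 k1 = k1 ->
  kistar F gamma t' k0' k1' = k1'.
Proof.
  intros Ha _ Htt H0 H1 H2 H3 Hk.
  pose proof Ha as [_ [_ [Hp _]]].
  assert (Hc : 0 < F k0 / f k0) by (apply Rdiv_lt_0_compat; [apply (F_pos F f Ha)|apply Hp]).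
  destruct (INR_archimed (F k0 / f k0) (t' - t) Hc) as [n Hn].
  assert (HT : threshold F t k0 k1 <= threshold F t' k0' k1').
  { apply (ind_step F f Ha t k0 H0 n t t' k0 k1 k0' k1'); auto; lra. }
  unfold kistar in *.
  destruct (Rle_dec gamma (threshold F t k0 k1)) as [h|h].
  - destruct (Rle_dec gamma (threshold F t' k0' k1')) as [h'|h']; auto. lra.
  - exfalso.
    assert (0 <= (1 - F k1) / f k1).
    { apply Rdiv_le_0_compat. pose proof (F_lt1 F f Ha k1); lra. apply Hp. }
    unfold is_k0star, is_k1star in *. lra.
Qed.
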